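(* Let $q=2^r$ with $r$ even, and $n\ge 1$. Let: - $g\in\mathbb{F}_q[x_1,\dots,x_n]$ be a polynomial of total degree $n(q-1)/3$; - $f\in\mathbb{F}_q[y]$ be a permutation polynomial of degree $q-2$; - $a\in\mathbb{F}_q$ be an element that is not a cube in $\mathbb{F}_q$. Then $$h(x_1,\dots,x_n,y)=\bigl(g(x_1,\dots,x_n)^3-a\bigr)f(y)$$ is a permutation polynomial in $\mathbb{F}_q[x_1,\dots,x_n,y]$.
   Context: $\mathbb{F}_q$ is the finite field with $q$ elements. A polynomial in $m$ variables over $\mathbb{F}_q$ is a permutation polynomial (PP) if, for every $c\in\mathbb{F}_q$, the equation $h=c$ has exactly $q^{m-1}$ solutions in $\mathbb{F}_q^m$. A univariate PP is a polynomial inducing a bijection of $\mathbb{F}_q$. *)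

(* Defs.v *)
From HB Require Import structures.
From mathcomp Require Import all_boot all_order all_algebra.
From mathcomp Require Import mpoly.
Set Implicit Arguments. Unset Strict Implicit. Unset Printing Implicit Defensive.
Import GRing.Theory.
Local Open Scope ring_scope.

Definition is_mPP (F : finFieldType) (m : nat) (h : {mpoly F[m]}) : Prop :=
  forall c : F, #|[set x : {ffun 'I_m -> F} | h.@[x] == c]| = (#|F| ^ m.-1)%N.

Definition is_PP (F : finFieldType) (f : {poly F}) : Prop :=
  bijective (fun y : F => f.[y]).

(* g(x_1..x_n), viewed in F[x_1,...,x_n,y] (variables 0..n-1 are x, n is y). *)
Definition liftx (F : finFieldType) (n : nat) (g : {mpoly F[n]}) : {mpoly F[n.+1]} :=
  g \mPo [tuple 'X_(widen_ord (leqnSn n) i) | i < n].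

Definition lifty (F : finFieldType) (n : nat) (f : {poly F}) : {mpoly F[n.+1]} :=
  (map_poly (@mpolyC n.+1 F) f).['X_(@ord_max n)].

Definition hpoly (F : finFieldType) (n : nat) (g : {mpoly F[n]}) (f : {poly F}) (a : F)
  : {mpoly F[n.+1]} :=
  (liftx g ^+ 3 - a%:MP) * lifty n f.

(* Main.v *)
Require Import Defs.
From HB Require Import structures.
From mathcomp Require Import all_boot all_order all_algebra.
From mathcomp Require Import mpoly.
Import GRing.Theory.
Local Open Scope ring_scope.

Lemma lifty_ev (F : finFieldType) n (f : {poly F}) (x : 'I_n.+1 -> F) :
  (lifty n f).@[x] = f.[x ord_max].
Proof.
rewrite /lifty -[X in _ = f.[X]](mevalXU x) -horner_map /= -map_poly_comp.
by congr (_.[_]); apply: map_poly_id => c _ /=; rewrite mevalC.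
Qed.

Lemma liftx_ev (F : finFieldType) n (g : {mpoly F[n]}) (x : 'I_n.+1 -> F) :
  (liftx g).@[x] = g.@[fun j => x (widen_ord (leqnSn n) j)].
Proof.
rewrite /liftx comp_mpoly_meval; apply: meval_eq => j.
by rewrite tnth_map tnth_ord_tuple mevalXU.
Qed.

Theorem mainTheorem7 (F : finFieldType) (r n : nat)
  (hq : #|F| = (2 ^ r)%N) (hr : ~~ odd r) (hn : (1 <= n)%N)
  (g : {mpoly F[n]}) (f : {poly F}) (a : F)
  (hg : msize g = ((n * (2 ^ r - 1)) %/ 3).+1)
  (hfPP : is_PP f) (hf : size f = (2 ^ r - 2).+1)
  (ha : forall b : F, b ^+ 3 != a) :
  is_mPP (hpoly g f a).
Proof.
move=> c; case: hfPP => finv fK Kf.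
pose r0 (x : {ffun 'I_n.+1 -> F}) : {ffun 'I_n -> F} := [ffun j : 'I_n => x (widen_ord (leqnSn n) j)].
pose d (u : {ffun 'I_n -> F}) := g.@[u] ^+ 3 - a.
have dnz u : d u != 0 by rewrite subr_eq0 ha.
pose yy u := finv (c / d u).
pose phi (u : {ffun 'I_n -> F}) : {ffun 'I_n.+1 -> F} :=
  [ffun i : 'I_n.+1 => if insub (val i) is Some j then u j else yy u].
have hev (x : {ffun 'I_n.+1 -> F}) : (hpoly g f a).@[x] = d (r0 x) * f.[x ord_max].
  rewrite /hpoly mevalM mevalB mevalC lifty_ev /d !exprS expr0 !mevalM meval1 liftx_ev.
  by congr ((_ * (_ * (_ * _)) - _) * _); apply: meval_eq => j; rewrite ffunE.
have r0phi u : r0 (phi u) = u.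
  apply/ffunP => j; rewrite !ffunE insubT ?ltn_ord //= => Hj.
  by congr (u _); apply: val_inj.
have phimax u : phi u ord_max = yy u by rewrite ffunE insubF //= ltnn.
have phi_inj : injective phi by move=> u v /(congr1 r0); rewrite !r0phi.
have -> : [set x : {ffun 'I_n.+1 -> F} | (hpoly g f a).@[x] == c] = phi @: setT.
  apply/setP => x; rewrite inE; apply/eqP/imsetP.
    move=> hx; exists (r0 x) => //; apply/ffunP => i; rewrite ffunE.
    case: insubP => [j Hj Hv|].
      by rewrite ffunE; congr (x _); apply: val_inj.
    move=> Hi; have -> : i = ord_max.
      by apply: val_inj => /=; move: (ltn_ord i); rewrite ltnS leq_eqVlt (negbTE Hi) orbF => /eqP.
    by rewrite /yy -hx hev mulrAC mulfV ?dnz // mul1r fK.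
  by move=> [u _ ->]; rewrite hev r0phi phimax /yy Kf mulrC divfK ?dnz.
by rewrite card_imset // cardsT card_ffun card_ord.
Qed.
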